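(* Let $S\in\mathbb{S}^d_m$, $G\in\mathcal{M}(S)$, and let $F$ be a closed set in $\mathbb{R}^d$. Then $F\subset G$ if and only if $\psi_F\le\psi_G$.
   Context: $\mathbb{S}^d_m$: symmetric invertible $d\times d$ real matrices with exactly $m$ positive eigenvalues; $S(x,y):=\langle x,Sy\rangle$. $G$ is $S$-monotone if $S(x-y,x-y)\ge0$ for $x,y\in G$; maximal if not a strict subset of another $S$-monotone set; $\mathcal{M}(S)$ = family of maximal $S$-monotone sets. For a set $F$, $\psi_F(y):=\sup_{x\in F}(S(x,y)-\frac12S(x,x))$, $y\in\mathbb{R}^d$. *)

(* Defs.v *)
From HB Require Import structures.
From mathcomp Require Import all_boot all_order all_algebra.
From mathcomp Require Import all_classical all_reals all_analysis.
Set Implicit Arguments. Unset Strict Implicit. Unset Printing Implicit Defensive.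
Import Order.TTheory GRing.Theory Num.Theory.
Import numFieldNormedType.Exports.
Local Open Scope ring_scope.
Local Open Scope classical_set_scope.

Definition Sform (R : realType) (d : nat) (S : 'M[R]_d) (x y : 'rV[R]_d) : R :=
  (x *m (S *m y^T)) 0 0.

(* \mathbb{S}^d_m : symmetric invertible matrices with exactly m positive
   eigenvalues (counted with multiplicity, i.e. as roots of the
   characteristic polynomial). *)
Definition in_Sdm (R : realType) (d m : nat) (S : 'M[R]_d) : Prop :=
  S^T = S /\ S \in unitmx /\
  exists lam : 'I_d -> R,
    char_poly S = \prod_(i < d) ('X - (lam i)%:P) /\
    #|[set i | 0 < lam i]| = m.

Definition S_monotone (R : realType) (d : nat) (S : 'M[R]_d)
  (G : set 'rV[R]_d) : Prop :=
  forall x y, G x -> G y -> 0 <= Sform S (x - y) (x - y).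

Definition maximal_S_monotone (R : realType) (d : nat) (S : 'M[R]_d)
  (G : set 'rV[R]_d) : Prop :=
  S_monotone S G /\
  forall H : set 'rV[R]_d, S_monotone S H -> G `<=` H -> H = G.

Definition psi (R : realType) (d : nat) (S : 'M[R]_d) (F : set 'rV[R]_d)
  (y : 'rV[R]_d) : \bar R :=
  ereal_sup [set (Sform S x y - Sform S x x / 2)%:E | x in F].

(* Main.v *)
Require Import Defs.
From HB Require Import structures.
From mathcomp Require Import all_boot all_order all_algebra.
From mathcomp Require Import all_classical all_reals all_analysis.
From mathcomp Require Import lra.
Import Order.TTheory GRing.Theory Num.Theory.
Import numFieldNormedType.Exports.
Local Open Scope ring_scope.
Local Open Scope classical_set_scope.

Section Aux.
Variables (R : realType) (d : nat) (S : 'M[R]_d).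

Lemma SformBl x x' y : Sform S (x - x') y = Sform S x y - Sform S x' y.
Proof. by rewrite /Sform mulmxBl !mxE. Qed.

Lemma SformBr x y y' : Sform S x (y - y') = Sform S x y - Sform S x y'.
Proof. by rewrite /Sform linearB /= !mulmxBr !mxE. Qed.

Lemma Sform_sym x y : S^T = S -> Sform S x y = Sform S y x.
Proof.
move=> hS; rewrite /Sform.
have -> : (x *m (S *m y^T)) 0 0 = ((x *m (S *m y^T))^T) 0 0 by rewrite [RHS]mxE.
by rewrite !trmx_mul trmxK hS mulmxA.
Qed.

End Aux.

Theorem lemma12 (R : realType) (d m : nat) (S : 'M[R]_d)
  (G F : set 'rV[R]_d) :
  in_Sdm m S -> maximal_S_monotone S G -> closed F ->
  (F `<=` G <-> (forall y : 'rV[R]_d, (psi S F y <= psi S G y)%E)).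
Proof.
move=> [hS _] [monG maxG] _; split.
  move=> FG y; apply: ereal_sup_le => _ [x Fx <-]; exists x => //; exact: FG.
move=> hpsi y Fy.
have key : forall g, G g -> 0 <= Sform S (y - g) (y - g).
  move=> g Gg.
  have h1 : ((Sform S y g - Sform S y y / 2)%:E <= psi S F g)%E.
    by apply: ereal_sup_ubound; exists y.
  have h2 : (psi S G g <= (Sform S g g / 2)%:E)%E.
    apply: ge_ereal_sup => _ [x Gx <-]; rewrite lee_fin.
    have := monG x g Gx Gg.
    rewrite !(SformBl, SformBr) (@Sform_sym R d S g x hS) => H.
    lra.
  have := le_trans h1 (le_trans (hpsi g) h2); rewrite lee_fin.
  rewrite !(SformBl, SformBr) (@Sform_sym R d S g y hS) => H.
  lra.
have monH : S_monotone S (G `|` [set y]).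
  move=> a b [Ga|->] [Gb|->].
  - exact: monG.
  - have := key a Ga.
    by rewrite !(SformBl, SformBr) (@Sform_sym R d S a y hS); lra.
  - exact: key.
  - by rewrite subrr /Sform mul0mx mxE.
have := maxG _ monH (@subsetUl _ G [set y]).
by move=> <-; right.
Qed.
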